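(* Let $\mathcal{H}$ be a real Hilbert space, let $N\geq 1$, let $f_1,\ldots,f_N\in\Gamma_0(\mathcal{H})$, and let $\mathcal{P}\subset\Delta_N$ be a nonempty closed convex set. Define $f\colon\mathcal{H}^N\to\mathbb{R}\cup\{+\infty\}$ by $f(\mathbf{x})=\sup_{p\in\mathcal{P}}\sum_{i=1}^N p_i f_i(x_i)$ for $\mathbf{x}=(x_1,\ldots,x_N)$. Let $\mathbf{x}\in\mathcal{H}^N$ and $\lambda>0$. Then the following hold. (i) If for every $i\in\{1,\ldots,N\}$, $f_i(x)=\langle a_i,x\rangle+\xi_i$ with $a_i\in\mathcal{H}\setminus\{0\}$ and $\xi_i\in\mathbb{R}$, then the problem $\min_{p\in\mathcal{P}}\frac12 p^\top Dp-p^\top\beta$, where $D=\mathrm{diag}(\lambda\|a_1\|^2,\ldots,\lambda\|a_N\|^2)$ and $\beta=(\langle a_i,x_i\rangle+\xi_i)_{i=1}^N$, has a unique solution $\overline{p}\in\mathcal{P}$, and $P_\lambda f(\mathbf{x})=(x_i-\lambda\overline{p}_i a_i)_{i=1}^N$. (ii) If $\mathcal{P}=\Delta_N$ and for every $i\in\{1,\ldots,N\}$, $f_i(x)=\|x-\xi_i\|^2$ with $\xi_i\in\mathcal{H}$, then $P_\lambda f(\mathbf{x})=\left(\frac{x_i+2\lambda\overline{p}_i\xi_i}{2\lambda\overline{p}_i+1}\right)_{i=1}^N$, where $\overline{p}\in\Delta_N$ is any solution of $\max_{p\in\Delta_N}\ell(p):=\sum_{i=1}^N\frac{p_i}{1+2\lambda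 p_i}\alpha_i$ with $\alpha_i=\|x_i-\xi_i\|^2$ for every $i$.
   Context: $\Gamma_0(\mathcal{H})$ is the set of proper, lower semicontinuous, convex functions $\mathcal{H}\to\mathbb{R}\cup\{+\infty\}$. $\Delta_N=\{p\in\mathbb{R}_+^N:\sum_{i=1}^Np_i=1\}$. For $g\in\Gamma_0(\mathcal{G})$ and $\lambda>0$, the proximity operator is $P_\lambda g(x)=\operatorname{argmin}_{y}\{g(y)+\frac{1}{2\lambda}\|x-y\|^2\}$. $\mathcal{H}^N$ carries the product Hilbert structure. *)

(* Defs.v *)
From HB Require Import structures.
From mathcomp Require Import all_boot all_order all_algebra.
From mathcomp Require Import all_classical all_reals all_analysis.
Set Implicit Arguments. Unset Strict Implicit. Unset Printing Implicit Defensive.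
Import Order.TTheory GRing.Theory Num.Theory.
Import numFieldNormedType.Exports.
Local Open Scope classical_set_scope.
Local Open Scope ring_scope.

Section Defs.
Variables (R : realType) (H : lmodType R) (ip : H -> H -> R).

Definition inner_product : Prop :=
  [/\ (forall x y, ip x y = ip y x),
      (forall (a : R) x y z, ip (a *: x + y) z = a * ip x z + ip y z)
    & (forall x, x != 0 -> 0 < ip x x)].

Definition hnorm (x : H) : R := Num.sqrt (ip x x).

Definition hcomplete : Prop :=
  forall u : nat -> H,
    (forall e : R, 0 < e -> exists M : nat, forall m n : nat,
        (M <= m)%N -> (M <= n)%N -> hnorm (u m - u n) < e) ->
    exists x : H, (fun n => hnorm (u n - x)) @ \oo --> (0 : R).

Definition hilbert : Prop := inner_product /\ hcomplete.

Definition proper_fun (f : H -> \bar R) : Prop :=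
  (exists x, f x < +oo)%E /\ (forall x, f x != -oo)%E.

Definition lsc_fun (f : H -> \bar R) : Prop :=
  forall (c : R) (u : nat -> H) (x : H),
    (forall n, (f (u n) <= c%:E)%E) ->
    (fun n => hnorm (u n - x)) @ \oo --> (0 : R) ->
    (f x <= c%:E)%E.

Definition convex_fun (f : H -> \bar R) : Prop :=
  forall (x y : H) (t : R), 0 < t < 1 ->
    (f (t *: x + (1 - t) *: y)%R <= t%:E * f x + (1 - t)%:E * f y)%E.

Definition Gamma0 (f : H -> \bar R) : Prop :=
  [/\ proper_fun f, lsc_fun f & convex_fun f].

End Defs.

Definition simplex (R : realType) (N : nat) : set ('I_N -> R) :=
  [set p | (forall i, 0 <= p i) /\ \sum_(i < N) p i = 1].

Definition convex_setN (R : realType) (N : nat) (P : set ('I_N -> R)) : Prop :=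
  forall (p q : 'I_N -> R) (t : R), 0 <= t <= 1 -> P p -> P q ->
    P (fun i => t * p i + (1 - t) * q i).

Definition closed_set (R : realType) (N : nat) (P : set ('I_N -> R)) : Prop :=
  forall (u : nat -> 'I_N -> R) (q : 'I_N -> R),
    (forall n, P (u n)) -> (forall i, (fun n => u n i) @ \oo --> q i) -> P q.

Definition sup_fun (R : realType) (H : lmodType R) (N : nat)
  (P : set ('I_N -> R)) (fs : 'I_N -> H -> \bar R) (x : 'I_N -> H) : \bar R :=
  ereal_sup [set (\sum_(i < N) ((p i)%:E * fs i (x i)))%E | p in P].

Definition argmin {R : realType} {T : Type} (F : T -> \bar R) : set T :=
  [set y | forall z, (F y <= F z)%E].

Definition argmin_in (R : realType) {T : Type} (A : set T) (F : T -> R) : set T :=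
  [set y | A y /\ forall z, A z -> F y <= F z].

Definition argmax_in (R : realType) {T : Type} (A : set T) (F : T -> R) : set T :=
  [set y | A y /\ forall z, A z -> F z <= F y].

(** proximity operator on H^N (product Hilbert structure), as the argmin set
    of  y |-> g y + 1/(2 lam) ||x - y||^2 ;  P_lam g(x) = y0  means this set is {y0}. *)
Definition prox_set (R : realType) (H : lmodType R) (ip : H -> H -> R) (N : nat)
  (g : ('I_N -> H) -> \bar R) (lam : R) (x : 'I_N -> H) : set ('I_N -> H) :=
  argmin (fun y : 'I_N -> H =>
    (g y + ((2 * lam)^-1 * \sum_(i < N) hnorm ip (x i - y i) ^+ 2)%:E)%E).

(* Main.v *)
Require Import Defs.
From HB Require Import structures.
From mathcomp Require Import all_boot all_order all_algebra.
From mathcomp Require Import all_classical all_reals all_analysis.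
From mathcomp Require Import ring lra.
Import Order.TTheory GRing.Theory Num.Theory.
Import numFieldNormedType.Exports.
Local Open Scope classical_set_scope.
Local Open Scope ring_scope.
Section IP.
Variables (R : realType) (H : lmodType R) (ip : H -> H -> R).
Hypothesis hip : inner_product ip.

Lemma ipC x y : ip x y = ip y x.
Proof. by case: hip. Qed.
Lemma ipDl x y z : ip (x + y) z = ip x z + ip y z.
Proof. by case: hip => _ h _; have := h 1 x y z; rewrite scale1r mul1r. Qed.
Lemma ip0l z : ip 0 z = 0.
Proof. have := ipDl 0 0 z; rewrite addr0 => h; lra. Qed.
Lemma ipZl a x z : ip (a *: x) z = a * ip x z.
Proof. by case: hip => _ h _; rewrite -(addr0 (a *: x)) h ip0l addr0. Qed.
Lemma ipNl x z : ip (- x) z = - ip x z.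
Proof. by rewrite -scaleN1r ipZl mulN1r. Qed.
Lemma ipBl x y z : ip (x - y) z = ip x z - ip y z.
Proof. by rewrite ipDl ipNl. Qed.
Lemma ipDr x y z : ip z (x + y) = ip z x + ip z y.
Proof. by rewrite ipC ipDl !(ipC z). Qed.
Lemma ipZr a x z : ip z (a *: x) = a * ip z x.
Proof. by rewrite ipC ipZl ipC. Qed.
Lemma ipNr x z : ip z (- x) = - ip z x.
Proof. by rewrite ipC ipNl ipC. Qed.
Lemma ipBr x y z : ip z (x - y) = ip z x - ip z y.
Proof. by rewrite ipDr ipNr. Qed.
Lemma ip_ge0 x : 0 <= ip x x.
Proof. case: (eqVneq x 0) => [->|nx]; first by rewrite ip0l.
by case: hip => _ _ h; exact/ltW/h. Qed.
Lemma ip_eq0 x : ip x x = 0 -> x = 0.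
Proof. case: (eqVneq x 0) => // nx; case: hip => _ _ h.
by have := h _ nx => /gt_eqF/eqP. Qed.
Lemma hnorm2 x : hnorm ip x ^+ 2 = ip x x.
Proof. by rewrite /hnorm sqr_sqrtr // ip_ge0. Qed.
Lemma ipDD u h : ip (u + h) (u + h) = ip u u + 2 * ip u h + ip h h.
Proof. rewrite ipDl !ipDr (ipC h u); ring. Qed.
Lemma ipBB u h : ip (u - h) (u - h) = ip u u - 2 * ip u h + ip h h.
Proof. rewrite ipBl !ipBr (ipC h u); ring. Qed.
End IP.
Lemma first_order (R : realType) (c Q : R) : 0 <= Q ->
  (forall t, 0 < t <= 1 -> 0 <= t * c + t ^+ 2 * Q) -> 0 <= c.
Proof.
move=> Q0 h; rewrite leNgt; apply/negP => c0.
have Qc : 0 < Q - c by lra.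
have t0 : 0 < - c / (Q - c) by rewrite divr_gt0 // oppr_gt0.
have t1 : - c / (Q - c) <= 1 by rewrite ler_pdivrMr // mul1r; lra.
have := h _ (andb_true_intro (conj t0 t1)).
have -> : - c / (Q - c) * c + (- c / (Q - c)) ^+ 2 * Q = - (- c / (Q - c)) * (c ^+ 2 / (Q - c)).
  by field; rewrite gt_eqF.
rewrite mulNr oppr_ge0 leNgt => /negP; apply; apply: mulr_gt0 => //.
by apply: divr_gt0 => //; rewrite exprn_even_gt0 //= lt_eqF.
Qed.
Lemma simplex_le1 (R : realType) N (p : 'I_N -> R) i : simplex p -> 0 <= p i <= 1.
Proof.
move=> [p0 p1]; rewrite p0 /= -p1 (bigD1 i) //= lerDl.
by apply: sumr_ge0 => j _.
Qed.

Lemma exists_min (R : realType) N (P : set ('I_N -> R)) (G : 'rV[R]_N -> R) :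
  P `<=` @simplex R N -> P !=set0 -> closed_set P -> continuous G ->
  exists2 c, P c & forall p, P p -> G (\row_i c i) <= G (\row_i p i).
Proof.
move=> Psub [p0 Pp0] Pcl Gc.
pose A := [set v : 'rV[R]_N | P (fun i => v ord0 i)].
have rowK p : (fun i => (\row_j p j) ord0 i) = p by apply/funext => i; rewrite mxE.
have A0 : A !=set0 by exists (\row_i p0 i); rewrite /A /= rowK.
have Acl : closed A.
  move=> v clv.
  have hB n : exists w, A w /\ forall i, `|v ord0 i - w ord0 i| < n.+1%:R^-1.
    have nB : nbhs v [set w | forall i, `|v ord0 i - w ord0 i| < n.+1%:R^-1].
      apply: (@filter_forall _ _ (fun i w => `|v ord0 i - w ord0 i| < n.+1%:R^-1) (nbhs v) _) => i.
      have := @coord_continuous R 1 N ord0 i v.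
      by move/cvgrPdist_lt; apply; rewrite invr_gt0.
    by have [w [Aw Bw]] := clv _ nB; exists w.
  have /choice [u hu] := hB.
  apply: (Pcl (fun n i => u n ord0 i)) => [n|i]; first exact: (hu n).1.
  apply/cvgrPdist_lt => e e0.
  near=> n.
  apply: (lt_le_trans ((hu n).2 i)).
  have : e^-1 < n%:R by near: n; exact: nbhs_infty_gtr.
  have ee : e * e^-1 = 1 by rewrite divff // gt_eqF.
  move=> hn; rewrite -[X in X <= _]mul1r ler_pdivrMr ?ltr0Sn //.
  rewrite -addn1 natrD; nra.
have Acomp : compact A.
  have K := @rV_compact R N (fun _ => `[(0:R), 1]%classic) (fun _ => @segment_compact R 0 1).
  apply: (subclosed_compact Acl K).
  move=> v Av i /=; rewrite in_itv /=; have := @simplex_le1 R N (fun i => v ord0 i) i (Psub _ Av); exact.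
have [c Ac minc] := EVT_min_rV A0 Acomp (continuous_subspaceT Gc).
exists (fun i => c ord0 i); first by move: Ac; rewrite inE.
move=> p Pp.
have -> : \row_i c ord0 i = c by apply/rowP => i; rewrite mxE; congr (c _ _); apply/val_inj; case: ord0 => -[].
by apply: minc; rewrite inE /A /= rowK.
Unshelve. all: by end_near.
Qed.
Lemma cont_sum (R : realType) N (g : 'I_N -> 'rV[R]_N -> R) :
  (forall i, continuous (g i)) -> continuous (fun v => \sum_(i < N) g i v).
Proof.
move=> h; apply: (@continuous_big _ _ +%R 0 xpredT) => //.
exact: add_continuous.
Qed.

Lemma cont_coord (R : realType) N i : continuous (fun v : 'rV[R]_N => v ord0 i).
Proof. exact: coord_continuous. Qed.
Arguments cont_coord {R N} i.

Lemma cont_q (R : realType) N (d b : 'I_N -> R) :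
  continuous (fun v : 'rV[R]_N =>
    2^-1 * \sum_(i < N) d i * v ord0 i ^+ 2 - \sum_(i < N) v ord0 i * b i).
Proof.
have h1 : continuous (fun v : 'rV[R]_N => \sum_(i < N) d i * v ord0 i ^+ 2).
  apply: cont_sum => i w.
  have FF : Filter (nbhs w) := nbhs_filter w.
  exact: (@cvgM _ _ _ FF _ _ _ _ (@cvg_cst _ (d i) _ _ FF) (@cvgM _ _ _ FF _ _ _ _ (cont_coord i w) (cont_coord i w))).
have h2 : continuous (fun v : 'rV[R]_N => \sum_(i < N) v ord0 i * b i).
  apply: cont_sum => i w.
  have FF : Filter (nbhs w) := nbhs_filter w.
  exact: (@cvgM _ _ _ FF _ _ _ _ (cont_coord i w) (@cvg_cst _ _ _ _ FF)).
move=> v; have FF : Filter (nbhs v) := nbhs_filter v.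
exact: (@cvgB _ _ _ _ FF _ _ _ _ (@cvgM _ _ _ FF _ _ _ _ (@cvg_cst _ _ _ _ FF) (h1 v)) (h2 v)).
Qed.

Lemma cont_ell (R : realType) N (lam : R) (al : 'I_N -> R) : 0 <= lam ->
  continuous (fun v : 'rV[R]_N =>
    \sum_(i < N) v ord0 i / (1 + 2 * lam * `|v ord0 i|) * al i).
Proof.
move=> l0; apply: cont_sum => i w.
have FF : Filter (nbhs w) := nbhs_filter w.
have hd : 1 + 2 * lam * `|w ord0 i| != 0.
  by apply: lt0r_neq0; apply: ltr_pwDl => //; rewrite mulr_ge0 // mulr_ge0.
have c1 := @cvgD _ _ _ _ FF _ _ _ _ (@cvg_cst _ (1:R) _ _ FF) (@cvgM _ _ _ FF _ _ _ _ (@cvg_cst _ (2 * lam) _ _ FF) (@cvg_norm _ _ _ _ FF _ _ (cont_coord i w))).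
exact: (@cvgM _ _ _ FF _ _ _ _ (@cvgM _ _ _ FF _ _ _ _ (cont_coord i w) (@cvgV _ _ _ FF _ _ hd c1)) (@cvg_cst _ _ _ _ FF)).
Qed.
Arguments ip_ge0 {R H ip}.
Arguments ip_eq0 {R H ip}.
Arguments hnorm2 {R H ip}.

Lemma sup_fun_ge (R : realType) (H : lmodType R) N (P : set ('I_N -> R))
  (fs : 'I_N -> H -> \bar R) y p :
  P p -> (\sum_(i < N) (p i)%:E * fs i (y i) <= sup_fun P fs y)%E.
Proof. by move=> Pp; apply: ereal_sup_ubound; exists p. Qed.

Lemma sup_fun_eq (R : realType) (H : lmodType R) N (P : set ('I_N -> R))
  (fs : 'I_N -> H -> \bar R) y p :
  P p -> (forall p', P p' -> (\sum_(i < N) (p' i)%:E * fs i (y i) <= \sum_(i < N) (p i)%:E * fs i (y i))%E) ->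
  sup_fun P fs y = (\sum_(i < N) (p i)%:E * fs i (y i))%E.
Proof.
move=> Pp h; apply/eqP; rewrite eq_le; apply/andP; split; last exact: sup_fun_ge.
by apply: ub_ereal_sup => _ [p' Pp' <-]; exact: h.
Qed.

Lemma prox_unique (R : realType) (H : lmodType R) (ip : H -> H -> R) N
  (g : ('I_N -> H) -> \bar R) lam x ys (m : R) :
  inner_product ip -> 0 < lam ->
  (g ys + ((2 * lam)^-1 * \sum_(i < N) hnorm ip (x i - ys i) ^+ 2)%:E = m%:E)%E ->
  (forall y, ((m + (2 * lam)^-1 * \sum_(i < N) ip (y i - ys i) (y i - ys i))%:E
      <= g y + ((2 * lam)^-1 * \sum_(i < N) hnorm ip (x i - y i) ^+ 2)%:E)%E) ->
  prox_set ip g lam x = [set ys].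
Proof.
move=> hip l0 hm hy.
have e0 y : 0 <= (2 * lam)^-1 * \sum_(i < N) ip (y i - ys i) (y i - ys i).
  apply: mulr_ge0; first by rewrite invr_ge0; lra.
  by apply: sumr_ge0 => i _; exact: ip_ge0.
apply/seteqP; split => [y ymin | _ ->].
- have h1 := ymin ys; rewrite hm in h1.
  have := le_trans (hy y) h1; rewrite lee_fin gerDl => hle.
  have hs : \sum_(i < N) ip (y i - ys i) (y i - ys i) = 0.
    have := e0 y => h2.
    have : (2 * lam)^-1 * \sum_(i < N) ip (y i - ys i) (y i - ys i) = 0 by lra.
    move/eqP; rewrite mulf_eq0 invr_eq0 => /orP [|/eqP //]; lra.
  apply/funext => i; apply/eqP; rewrite -subr_eq0; apply/eqP.
  apply: (ip_eq0 hip).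
  have /psumr_eq0P := hs; apply => // j _; exact: ip_ge0.
- move=> z; rewrite hm; apply: le_trans (hy z); rewrite lee_fin lerDl; exact: e0.
Qed.
Arguments ipZl {R H ip}.
Arguments ipDl {R H ip}.
Arguments ipBl {R H ip}.
Arguments ipDD {R H ip}.
Arguments ipBr {R H ip}.
Arguments ipZr {R H ip}.
Arguments ipDr {R H ip}.
Arguments ipBB {R H ip}.
Arguments ipC {R H ip}.

Lemma zaddsub (V : zmodType) (y z : V) : y = z + (y - z).
Proof. by rewrite addrC subrK. Qed.
Lemma zsubB_sub (V : zmodType) (x y z : V) : x - y = (x - z) - (y - z).
Proof. by rewrite opprB addrA subrK. Qed.
Lemma zsubsub (V : zmodType) (x u : V) : x - (x - u) = u.
Proof. by rewrite opprB addrC subrK. Qed.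

Lemma keyid_i (R : realType) (H : lmodType R) (ip : H -> H -> R) (x a y : H) (xi pb lam : R) :
  inner_product ip -> 0 < lam ->
  pb * (ip a (x - (lam * pb) *: a) + xi) + (2 * lam)^-1 * hnorm ip (x - (x - (lam * pb) *: a)) ^+ 2
  + (2 * lam)^-1 * ip (y - (x - (lam * pb) *: a)) (y - (x - (lam * pb) *: a))
  = pb * (ip a y + xi) + (2 * lam)^-1 * hnorm ip (x - y) ^+ 2.
Proof.
move=> hip l0; rewrite !(hnorm2 hip) zsubsub !(ipBB hip) !(ipBr hip) !(ipZl hip) !(ipZr hip).
rewrite (ipC hip y x) (ipC hip x a) (ipC hip y a).
field; lra.
Qed.

Lemma qexp (R : realType) N (d b p r : 'I_N -> R) :
  (2^-1 * \sum_(i < N) d i * p i ^+ 2 - \sum_(i < N) p i * b i)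
  - (2^-1 * \sum_(i < N) d i * r i ^+ 2 - \sum_(i < N) r i * b i)
  = \sum_(i < N) (d i * r i - b i) * (p i - r i)
    + 2^-1 * \sum_(i < N) d i * (p i - r i) ^+ 2.
Proof.
rewrite !mulr_sumr -!sumrB -big_split /=; apply: eq_bigr => i _; by field.
Qed.

Lemma part_i (R : realType) (H : lmodType R) (ip : H -> H -> R)
  (N : nat) (fs : 'I_N -> H -> \bar R) (P : set ('I_N -> R))
  (x : 'I_N -> H) (lam : R) :
  inner_product ip ->
  P `<=` @simplex R N -> P !=set0 -> closed_set P -> convex_setN P ->
  0 < lam ->
  (forall (a : 'I_N -> H) (xi : 'I_N -> R),
     (forall i, a i != 0) ->
     (forall i y, fs i y = (ip (a i) y + xi i)%:E) ->
     exists pbar : 'I_N -> R,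
       argmin_in P (fun p : 'I_N -> R =>
          2^-1 * \sum_(i < N) (lam * hnorm ip (a i) ^+ 2) * p i ^+ 2
          - \sum_(i < N) p i * (ip (a i) (x i) + xi i)) = [set pbar]
       /\ prox_set ip (sup_fun P fs) lam x
          = [set (fun i => x i - (lam * pbar i) *: a i)]).
Proof.
move=> hip Psub P0 Pcl Pcv l0 a xi a0 fsE.
pose d i := lam * hnorm ip (a i) ^+ 2.
pose b i := ip (a i) (x i) + xi i.
pose q (p : 'I_N -> R) := 2^-1 * \sum_(i < N) d i * p i ^+ 2 - \sum_(i < N) p i * b i.
have d0 i : 0 < d i.
  rewrite /d hnorm2 //; apply: mulr_gt0 => //.
  by case: hip => _ _ h; exact: h.
pose G := fun v : 'rV[R]_N => 2^-1 * \sum_(i < N) d i * v ord0 i ^+ 2 - \sum_(i < N) v ord0 i * b i.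
have Gq p : G (\row_i p i) = q p.
  by rewrite /G /q; congr (_ * _ - _); apply: eq_bigr => i _; rewrite mxE.
have [pb Ppb pbmin] := @exists_min R N P G Psub P0 Pcl (@cont_q R N d b).
have {}pbmin p : P p -> q pb <= q p by move=> Pp; rewrite -!Gq; exact: pbmin.
pose c p := \sum_(i < N) (d i * pb i - b i) * (p i - pb i).
pose Q p := 2^-1 * \sum_(i < N) d i * (p i - pb i) ^+ 2.
have Q0 p : 0 <= Q p.
  apply: mulr_ge0; first lra.
  by apply: sumr_ge0 => i _; apply: mulr_ge0; [exact: ltW|exact: sqr_ge0].
have VI p : P p -> 0 <= c p.
  move=> Pp; apply: (@first_order R (c p) (Q p) (Q0 p)) => t /andP [t0 t1].
  pose pt := fun i => t * p i + (1 - t) * pb i.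
  have Ppt : P pt by apply: Pcv => //; rewrite ltW.
  have := pbmin _ Ppt; rewrite -subr_ge0 /q qexp.
  have -> : \sum_(i < N) (d i * pb i - b i) * (pt i - pb i) + 2^-1 * \sum_(i < N) d i * (pt i - pb i) ^+ 2
     = t * c p + t ^+ 2 * Q p.
    rewrite /c /Q /pt !mulr_sumr; congr (_ + _); apply: eq_bigr => i _; ring.
  by [].
exists pb; split.
  apply/seteqP; split => [p [Pp pmin] | _ ->]; last by split.
  have h1 : q p <= q pb := pmin _ Ppb.
  have := @qexp R N d b p pb; rewrite -/(q p) -/(q pb) -/(c p) -/(Q p) => h2.
  have h3 := VI _ Pp.
  have hQ : Q p = 0.
    have := Q0 p; lra.
  have hs : \sum_(i < N) d i * (p i - pb i) ^+ 2 = 0.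
    by move/eqP: hQ; rewrite /Q mulf_eq0 invr_eq0 pnatr_eq0 orFb => /eqP.
  apply/funext => i /=; apply/eqP; rewrite -subr_eq0; apply/eqP.
  have := (psumr_eq0P (fun j _ => mulr_ge0 (ltW (d0 j)) (sqr_ge0 (p j - pb j))) hs) i isT.
  by move/eqP; rewrite mulf_eq0 (gt_eqF (d0 i)) /= sqrf_eq0 => /eqP.
pose ys := fun i => x i - (lam * pb i) *: a i.
have ipys i : ip (a i) (ys i) + xi i = b i - d i * pb i.
  by rewrite /ys (ipBr hip) (ipZr hip) /d /b (hnorm2 hip); ring.
pose T (y : 'I_N -> H) i := pb i * (ip (a i) (y i) + xi i) + (2 * lam)^-1 * hnorm ip (x i - y i) ^+ 2.
have Tsplit y : \sum_(i < N) pb i * (ip (a i) (y i) + xi i) + (2 * lam)^-1 * \sum_(i < N) hnorm ip (x i - y i) ^+ 2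
   = \sum_(i < N) T y i by rewrite mulr_sumr -big_split.
have fsum y p : (\sum_(i < N) (p i)%:E * fs i (y i) = (\sum_(i < N) p i * (ip (a i) (y i) + xi i))%:E)%E.
  by rewrite -sumEFin; apply: eq_bigr => i _; rewrite fsE EFinM.
apply: (@prox_unique _ _ _ _ _ _ _ ys (\sum_(i < N) T ys i) hip l0).
  rewrite (@sup_fun_eq R H N P fs ys pb Ppb); last first.
    move=> p' Pp'; rewrite !fsum lee_fin.
    have := VI _ Pp'; rewrite /c -subr_ge0 -sumrB.
    congr (0 <= _); apply: eq_bigr => i _; rewrite ipys; ring.
  by rewrite fsum -EFinD Tsplit.
move=> y.
apply: le_trans (leeD2r _ (@sup_fun_ge R H N P fs y pb Ppb)).
rewrite fsum -EFinD lee_fin Tsplit mulr_sumr -big_split /=.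
apply: ler_sum => i _; rewrite le_eqVlt; apply/orP; left; apply/eqP.
rewrite /T /ys; exact: keyid_i.
Qed.
Lemma simplex_convex (R : realType) N : convex_setN (@simplex R N).
Proof.
move=> p q t /andP [t0 t1] [p0 p1] [q0 q1]; split.
  move=> i; apply: addr_ge0; apply: mulr_ge0 => //; lra.
by rewrite big_split /= -!mulr_sumr p1 q1; ring.
Qed.

Lemma keyid_ii (R : realType) (H : lmodType R) (ip : H -> H -> R) (x xi y : H) (s lam : R) :
  inner_product ip -> 0 < lam -> 0 <= s ->
  let ys := (2 * lam * s + 1)^-1 *: (x + (2 * lam * s) *: xi) in
  s * hnorm ip (y - xi) ^+ 2 + (2 * lam)^-1 * hnorm ip (x - y) ^+ 2
  = s * hnorm ip (ys - xi) ^+ 2 + (2 * lam)^-1 * hnorm ip (x - ys) ^+ 2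
    + (s + (2 * lam)^-1) * ip (y - ys) (y - ys).
Proof.
move=> hip l0 s0 ys; rewrite /ys !(hnorm2 hip).
do 4 rewrite ?(ipBl hip) ?(ipBr hip) ?(ipDl hip) ?(ipDr hip) ?(ipZl hip) ?(ipZr hip).
rewrite ?(ipC hip y x) ?(ipC hip xi x) ?(ipC hip xi y).
have : 2 * lam * s + 1 != 0 by apply: lt0r_neq0; nra.
move=> hA; field; rewrite hA /=; lra.
Qed.

Lemma ys_xi (R : realType) (H : lmodType R) (x xi : H) (k : R) :
  k + 1 != 0 -> (k + 1)^-1 *: (x + k *: xi) - xi = (k + 1)^-1 *: (x - xi).
Proof.
move=> hk.
have exi : xi = ((k + 1)^-1 * k) *: xi + (k + 1)^-1 *: xi.
  by rewrite -scalerDl (_ : _ + _ = 1) ?scale1r //; field.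
rewrite scalerDr scalerBr scalerA {2}exi opprD addrA addrK //.
Qed.
Lemma part_ii (R : realType) (H : lmodType R) (ip : H -> H -> R)
  (N : nat) (fs : 'I_N -> H -> \bar R) (P : set ('I_N -> R))
  (x : 'I_N -> H) (lam : R) :
  inner_product ip -> P !=set0 -> closed_set P -> 0 < lam ->
  (forall xi : 'I_N -> H,
     P = @simplex R N ->
     (forall i y, fs i y = (hnorm ip (y - xi i) ^+ 2)%:E) ->
     let ell := fun p : 'I_N -> R =>
        \sum_(i < N) p i / (1 + 2 * lam * p i) * hnorm ip (x i - xi i) ^+ 2 in
     (argmax_in (@simplex R N) ell !=set0) /\
     forall pbar : 'I_N -> R, argmax_in (@simplex R N) ell pbar ->
       prox_set ip (sup_fun P fs) lam x
       = [set (fun i => (2 * lam * pbar i + 1)^-1 *: (x i + (2 * lam * pbar i) *: xi i))]).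
Proof.
move=> hip P0 Pcl l0 xi PE fsE ell; subst P.
pose al i := hnorm ip (x i - xi i) ^+ 2.
have al0 i : 0 <= al i by rewrite /al sqr_ge0.
split.
  pose G := fun v : 'rV[R]_N => - (\sum_(i < N) v ord0 i / (1 + 2 * lam * `|v ord0 i|) * al i).
  have Gc : continuous G.
    move=> v; have FF : Filter (nbhs v) := nbhs_filter v.
    exact: (@cvgN _ _ _ _ FF _ _ (@cont_ell R N lam al (ltW l0) v)).
  have [pm Spm pmin] := @exists_min R N (@simplex R N) G (fun _ h => h) P0 Pcl Gc.
  have Gq p : simplex p -> G (\row_i p i) = - ell p.
    move=> [p0 _]; rewrite /G /ell; congr (- _); apply: eq_bigr => i _.
    by rewrite mxE ger0_norm.
  exists pm; split => // p Sp.
  by have := pmin p Sp; rewrite (Gq _ Sp) (Gq _ Spm) lerN2.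
move=> pb [Spb pbmax].
have pb0 i : 0 <= pb i by case: Spb.
pose A i := 1 + 2 * lam * pb i.
have A0 i : 0 < A i by rewrite /A; have := pb0 i; nra.
pose c i := al i / A i ^+ 2.
have OPT p : simplex p -> \sum_(i < N) p i * c i <= \sum_(i < N) pb i * c i.
  move=> Sp.
  pose K := \sum_(i < N) 2 * lam * al i * (p i - pb i) ^+ 2 / A i ^+ 2.
  have K0 : 0 <= K.
    apply: sumr_ge0 => i _; apply: divr_ge0; last exact: sqr_ge0.
    apply: mulr_ge0; last exact: sqr_ge0.
    by apply: mulr_ge0 => //; lra.
  suff : 0 <= \sum_(i < N) (pb i - p i) * c i.
    move=> h; rewrite -subr_ge0 -sumrB; apply: le_trans h _; rewrite le_eqVlt; apply/orP; left; apply/eqP; apply: eq_bigr => i _; ring.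
  apply: (@first_order R _ K K0) => t /andP [t0 t1].
  pose pt i := t * p i + (1 - t) * pb i.
  have Spt : simplex pt by apply: simplex_convex => //; rewrite ltW.
  have hle : ell pt <= ell pb := pbmax _ Spt.
  suff : ell pb - ell pt <= t * \sum_(i < N) (pb i - p i) * c i + t ^+ 2 * K by lra.
  rewrite /ell -sumrB /K !mulr_sumr -big_split; apply: ler_sum => i _ /=.
  have pt0 : 0 <= pt i by case: Spt.
  have B1 : 1 <= 1 + 2 * lam * pt i by have := pt0; nra.
  have B0 : 0 < 1 + 2 * lam * pt i by lra.
  have -> : pb i / (1 + 2 * lam * pb i) * hnorm ip (x i - xi i) ^+ 2 -
      pt i / (1 + 2 * lam * pt i) * hnorm ip (x i - xi i) ^+ 2
      = t * ((pb i - p i) * c i) + t ^+ 2 * (2 * lam * al i * (p i - pb i) ^+ 2 / A i ^+ 2) / (1 + 2 * lam * pt i).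
    have Ai := A0 i; rewrite /A in Ai.
    rewrite /c /al /A /pt; field.
    by apply/andP; split; apply: lt0r_neq0; [exact: B0|exact: Ai].
  rewrite lerD2l ler_pdivrMr //; apply: ler_peMr => //.
  apply: mulr_ge0; first exact: sqr_ge0.
  apply: divr_ge0; last exact: sqr_ge0.
  apply: mulr_ge0; last exact: sqr_ge0.
  by apply: mulr_ge0 => //; lra.
pose ys := fun i => (2 * lam * pb i + 1)^-1 *: (x i + (2 * lam * pb i) *: xi i).
have hnys i : hnorm ip (ys i - xi i) ^+ 2 = c i.
  rewrite /ys ys_xi; last by rewrite addrC; apply: lt0r_neq0; exact: (A0 i).
  rewrite (hnorm2 hip) (ipZl hip) (ipZr hip) -(hnorm2 hip) -/(al i) /c /A.
  by field; apply: lt0r_neq0; exact: (A0 i).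
pose T (y : 'I_N -> H) i := pb i * hnorm ip (y i - xi i) ^+ 2 + (2 * lam)^-1 * hnorm ip (x i - y i) ^+ 2.
have Tsplit y : \sum_(i < N) pb i * hnorm ip (y i - xi i) ^+ 2 + (2 * lam)^-1 * \sum_(i < N) hnorm ip (x i - y i) ^+ 2
   = \sum_(i < N) T y i by rewrite mulr_sumr -big_split.
have fsum y p : (\sum_(i < N) (p i)%:E * fs i (y i) = (\sum_(i < N) p i * hnorm ip (y i - xi i) ^+ 2)%:E)%E.
  by rewrite -sumEFin; apply: eq_bigr => i _; rewrite fsE EFinM.
apply: (@prox_unique _ _ _ _ _ _ _ ys (\sum_(i < N) T ys i) hip l0).
  rewrite (@sup_fun_eq R H N (@simplex R N) fs ys pb Spb); last first.
    move=> p' Sp'; rewrite !fsum lee_fin.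
    have e1 q : \sum_(i < N) q i * hnorm ip (ys i - xi i) ^+ 2 = \sum_(i < N) q i * c i.
      by apply: eq_bigr => i _; rewrite hnys.
    by rewrite !e1; exact: OPT.
  by rewrite fsum -EFinD Tsplit.
move=> y.
apply: le_trans (leeD2r _ (@sup_fun_ge R H N (@simplex R N) fs y pb Spb)).
rewrite fsum -EFinD lee_fin Tsplit mulr_sumr -big_split /=.
apply: ler_sum => i _.
rewrite /T (@keyid_ii R H ip (x i) (xi i) (y i) (pb i) lam hip l0 (pb0 i)) -/(ys i).
rewrite lerD2l (mulrDl (pb i)) lerDr; apply: mulr_ge0 => //; exact: ip_ge0.
Qed.

Theorem proposition2p1 (R : realType) (H : lmodType R) (ip : H -> H -> R)
  (N : nat) (fs : 'I_N -> H -> \bar R) (P : set ('I_N -> R))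
  (x : 'I_N -> H) (lam : R) :
  hilbert ip -> (0 < N)%N ->
  (forall i, Gamma0 ip (fs i)) ->
  P `<=` @simplex R N -> P !=set0 -> closed_set P -> convex_setN P ->
  0 < lam ->
  (* (i) affine functions *)
  (forall (a : 'I_N -> H) (xi : 'I_N -> R),
     (forall i, a i != 0) ->
     (forall i y, fs i y = (ip (a i) y + xi i)%:E) ->
     exists pbar : 'I_N -> R,
       argmin_in P (fun p : 'I_N -> R =>
          2^-1 * \sum_(i < N) (lam * hnorm ip (a i) ^+ 2) * p i ^+ 2
          - \sum_(i < N) p i * (ip (a i) (x i) + xi i)) = [set pbar]
       /\ prox_set ip (sup_fun P fs) lam x
          = [set (fun i => x i - (lam * pbar i) *: a i)])
  /\
  (* (ii) squared distances, P = Delta_N *)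
  (forall xi : 'I_N -> H,
     P = @simplex R N ->
     (forall i y, fs i y = (hnorm ip (y - xi i) ^+ 2)%:E) ->
     let ell := fun p : 'I_N -> R =>
        \sum_(i < N) p i / (1 + 2 * lam * p i) * hnorm ip (x i - xi i) ^+ 2 in
     (argmax_in (@simplex R N) ell !=set0) /\
     forall pbar : 'I_N -> R, argmax_in (@simplex R N) ell pbar ->
       prox_set ip (sup_fun P fs) lam x
       = [set (fun i => (2 * lam * pbar i + 1)^-1 *: (x i + (2 * lam * pbar i) *: xi i))]).
Proof.
move=> [hip _] _ _ Psub P0 Pcl Pcv l0; split.
  exact: (@part_i R H ip N fs P x lam hip Psub P0 Pcl Pcv l0).
exact: (@part_ii R H ip N fs P x lam hip P0 Pcl l0).
Qed.
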